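(* Let $X$ be a random variable with finite support in $(l,r)$ (with $l,r$ finite), such that $(\theta,1-\theta)\in D_X$ for all $\theta\in(0,1)$. Then $$G_X(\theta,1-\theta)\le[r-\mathbb{E}(X)]^\theta[\mathbb{E}(X)-l]^{1-\theta}\qquad\text{for all }\theta\in(0,1).$$
   Context: For a random variable $X$ with CDF $F$ and survival function $\overline F=1-F$, with $l=\inf\{x:F(x)>0\}$, $r=\sup\{x:\overline F(x)>0\}$, the CIGF is $G_X(\alpha,\beta)=\int_l^r [F(x)]^\alpha[\overline F(x)]^\beta\,dx$ on $D_X=\{(\alpha,\beta)\in\mathbb{R}^2: G_X(\alpha,\beta)<\infty\}$. *)

(* Defs.v *)
From HB Require Import structures.
From mathcomp Require Import all_boot all_order all_algebra.
From mathcomp Require Import all_classical all_reals all_analysis.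
Set Implicit Arguments. Unset Strict Implicit. Unset Printing Implicit Defensive.
Import Order.TTheory GRing.Theory Num.Theory.
Import numFieldNormedType.Exports.
Local Open Scope classical_set_scope.
Local Open Scope ring_scope.

Definition cdfRV d (T : measurableType d) (R : realType) (P : probability T R)
  (X : {RV P >-> R}) (x : R) : R :=
  fine (P [set w | X w <= x]).

Definition survRV d (T : measurableType d) (R : realType) (P : probability T R)
  (X : {RV P >-> R}) (x : R) : R := 1 - cdfRV X x.

Definition lsupp d (T : measurableType d) (R : realType) (P : probability T R)
  (X : {RV P >-> R}) : R := inf [set x | 0 < cdfRV X x].

Definition rsupp d (T : measurableType d) (R : realType) (P : probability T R)
  (X : {RV P >-> R}) : R := sup [set x | 0 < survRV X x].

Definition CIGF d (T : measurableType d) (R : realType) (P : probability T R)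
  (X : {RV P >-> R}) (a b : R) : \bar R :=
  (\int[lebesgue_measure]_(x in `[lsupp X, rsupp X])
     ((cdfRV X x) `^ a * (survRV X x) `^ b)%:E)%E.

(* Main.v *)
Require Import Defs.
From HB Require Import structures.
From mathcomp Require Import all_boot all_order all_algebra.
From mathcomp Require Import all_classical all_reals all_analysis.
From mathcomp Require Import lra measurable_realfun.
Import Order.TTheory GRing.Theory Num.Theory.
Import numFieldNormedType.Exports.
Local Open Scope classical_set_scope.
Local Open Scope ring_scope.

Section aux.
Context d (T : measurableType d) (R : realType) (P : probability T R)
  (X : {RV P >-> R}).
Local Notation F := (cdfRV X).
Local Notation S := (survRV X).

Lemma cdfE x : cdf X x = (F x)%:E.
Proof.
rewrite /cdfRV /cdf /=.
have -> : [set w | X w <= x] = X @^-1` `]-oo, x].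
  by apply/seteqP; split => w /=; rewrite in_itv.
rewrite fineK//.
apply: fin_num_measure; exact: measurable_funPTI.
Qed.

Lemma ccdfE x : ccdf X x = (S x)%:E.
Proof. by rewrite ccdf_1_cdf cdfE /survRV EFinB. Qed.

Lemma F_ge0 x : 0 <= F x.
Proof. by rewrite -lee_fin -cdfE cdf_ge0. Qed.

Lemma F_le1 x : F x <= 1.
Proof. by rewrite -lee_fin -cdfE cdf_le1. Qed.

Lemma S_ge0 x : 0 <= S x.
Proof. by rewrite /survRV subr_ge0 F_le1. Qed.

Lemma S_le1 x : S x <= 1.
Proof. by rewrite /survRV lerBlDr lerDl F_ge0. Qed.

Lemma F_nd : {homo F : x y / x <= y}.
Proof. by move=> x y xy; rewrite -lee_fin -!cdfE cdf_nondecreasing. Qed.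

Lemma mF : measurable_fun setT F.
Proof. exact: measurable_realfun.nondecreasing_measurable F_nd. Qed.

Lemma mS : measurable_fun setT S.
Proof. by apply: measurable_funD => //; apply: measurableT_comp => //; exact: mF. Qed.

Lemma F0 x : has_lbound [set x | 0 < F x] -> x < lsupp X -> F x = 0.
Proof.
move=> hl xl; apply/eqP; rewrite eq_le F_ge0 andbT leNgt; apply/negP => Fx.
have := ge_inf hl Fx; rewrite -/(lsupp X) => lx.
by move: xl; rewrite ltNge lx.
Qed.

Lemma S0 x : has_ubound [set x | 0 < S x] -> rsupp X < x -> S x = 0.
Proof.
move=> hr xr; apply/eqP; rewrite eq_le S_ge0 andbT leNgt; apply/negP => Sx.
have := ub_le_sup hr Sx; rewrite -/(rsupp X) => lx.
by move: xr; rewrite ltNge lx.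
Qed.

Lemma l_le_r : has_lbound [set x | 0 < F x] -> has_ubound [set x | 0 < S x] ->
  lsupp X <= rsupp X.
Proof.
move=> hl hr; rewrite leNgt; apply/negP => rl.
pose x := (lsupp X + rsupp X) / 2.
have h1 : F x = 0 by apply: F0 => //; rewrite /x; lra.
have h2 : S x = 0 by apply: S0 => //; rewrite /x; lra.
by move: h2; rewrite /survRV h1 subr0 => /eqP; rewrite oner_eq0.
Qed.


Lemma EXE : ('E_P[X] = \int[lebesgue_measure]_(s in `[0%R, +oo[) (S s)%:E
   - \int[lebesgue_measure]_(s in `]-oo, 0%R[) (F s)%:E)%E.
Proof.
rewrite expectation_def integralE funerpos funerneg.
have -> : (\int[P]_x (EFin \o X^\+%R) x = 'E_P[X^\+%R])%E by rewrite expectation_def.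
rewrite ge0_expectation_ccdf; last by move=> ?; exact: funrpos_ge0.
have -> : (\int[P]_x (EFin \o X^\-%R) x = - 'E_P[- X^\-%R])%E.
  rewrite expectation_def.
  transitivity (- (\int[P]_x - (X^\-%R x)%:E))%E; last first.
    by congr (- _)%E; apply: eq_integral => w _ /=; rewrite EFinN.
  rewrite integral_ge0N ?oppeK//.
  by move=> w _; rewrite lee_fin funrneg_ge0.
rewrite le0_expectation_cdf/=; last by move=> ?; rewrite oppr_le0 funrneg_ge0.
rewrite oppeK; congr (_ - _)%E.
  apply: eq_integral => s /[!inE]/= s0; rewrite -ccdfE; congr (P _).
  rewrite in_itv/= andbT in s0.
  apply/seteqP; split => w /=; rewrite !in_itv/= !andbT /funrpos lt_max;
    rewrite [(s < 0)%R]ltNge s0 orbF//.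
apply: eq_integral => s /[!inE]/=; rewrite in_itv/= => s0; rewrite -cdfE; congr (P _).
apply/seteqP; split => w /=; rewrite !in_itv/= /funrneg;
  by rewrite lerNl le_max lerN2 oppr_le0 [(0 <= s)%R]leNgt s0 orbF.
Qed.


Lemma FS x : F x + S x = 1.
Proof. by rewrite /survRV addrC subrK. Qed.

End aux.

Section integrals.
Context {R : realType}.
Local Notation mu := (@lebesgue_measure R).

Lemma int_indic (A : set R) (g : R -> R) : measurable A ->
  (\int[mu]_(x in A) (g x)%:E = \int[mu]_x (g x * \1_A x)%:E)%E.
Proof.
move=> mA; rewrite integral_mkcond; apply: eq_integral => x _.
rewrite /patch indicE; case: ifP => _; by rewrite ?mulr1 ?mulr0.
Qed.

Lemma meas_gi (A : set R) (g : R -> R) : measurable A -> measurable_fun setT g ->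
  measurable_fun setT (fun x => (g x * \1_A x)%:E).
Proof.
move=> mA mg; apply/measurable_EFinP; apply: measurable_funM => //.
Qed.

Lemma I_add (A B : set R) (g1 g2 : R -> R) : measurable A -> measurable B ->
  measurable_fun setT g1 -> measurable_fun setT g2 ->
  (forall x, 0 <= g1 x) -> (forall x, 0 <= g2 x) ->
  (\int[mu]_x (g1 x * \1_A x + g2 x * \1_B x)%:E =
   \int[mu]_x (g1 x * \1_A x)%:E + \int[mu]_x (g2 x * \1_B x)%:E)%E.
Proof.
move=> mA mB mg1 mg2 g10 g20.
under eq_integral do rewrite EFinD.
apply: ge0_integralD => //; try (by move=> x _; rewrite lee_fin mulr_ge0);
  exact: meas_gi.
Qed.

Lemma I_one (A : set R) : measurable A ->
  (\int[mu]_x (1 * \1_A x)%:E = mu A)%E.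
Proof.
move=> mA; under eq_integral do rewrite mul1r.
by rewrite integral_indic// setIT.
Qed.

Lemma mu_cc (a b : R) : a <= b -> mu `[a, b] = (b - a)%:E.
Proof.
move=> ab; rewrite lebesgue_measure_itv/= lte_fin.
by case: ltgtP ab => // -> _; rewrite subrr.
Qed.

Lemma mu_co (a b : R) : a <= b -> mu `[a, b[ = (b - a)%:E.
Proof.
move=> ab; rewrite lebesgue_measure_itv/= lte_fin.
by case: ltgtP ab => // -> _; rewrite subrr.
Qed.

End integrals.


Lemma fin2 {R : realType} {u v : \bar R} {c : R} : (0 <= u)%E -> (0 <= v)%E ->
  (u + v = c%:E)%E -> exists u' v' : R, u = u'%:E /\ v = v'%:E.
Proof.
case: u => [u'| |] //; case: v => [v'| |] //; first by exists u', v'.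
Qed.

Lemma fin1 {R : realType} {v w : \bar R} {c : R} : (0 <= w)%E ->
  (c%:E = v + w)%E -> v \is a fin_num -> exists w' : R, w = w'%:E.
Proof.
case: w => [w'| |] //; first by exists w'.
by case: v.
Qed.

Section main.
Context d (T : measurableType d) (R : realType) (P : probability T R)
  (X : {RV P >-> R}).
Local Notation F := (cdfRV X).
Local Notation S := (survRV X).
Local Notation mu := (@lebesgue_measure R).
Hypothesis hl : has_lbound [set x | 0 < F x].
Hypothesis hr : has_ubound [set x | 0 < S x].

Lemma key : exists sL fL : R,
  (\int[mu]_(x in `[lsupp X, rsupp X]) (S x)%:E = sL%:E)%E /\
  (\int[mu]_(x in `[lsupp X, rsupp X]) (F x)%:E = fL%:E)%E /\
  ('E_P[X] = (lsupp X + sL)%:E)%E /\ fL + sL = rsupp X - lsupp X.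
Proof.
have lr := @l_le_r _ _ _ _ X hl hr.
have hF0 x : x < lsupp X -> F x = 0 by exact: (@F0 _ _ _ _ X).
have hS0 x : rsupp X < x -> S x = 0 by exact: (@S0 _ _ _ _ X).
move: lr hF0 hS0; set l := lsupp X; set r := rsupp X => lr hF0 hS0.
pose a := Num.min l 0; pose b := Num.max r 0.
have ha1 : a <= l by rewrite /a ge_min lexx.
have ha2 : a <= 0 by rewrite /a ge_min lexx orbT.
have hb1 : r <= b by rewrite /b le_max lexx.
have hb2 : 0 <= b by rewrite /b le_max lexx orbT.
clearbody a b.
have E1 := @EXE _ _ _ _ X.
rewrite (int_indic _ _ (measurable_itv _)) (int_indic _ _ (measurable_itv _)) in E1.
clearbody l r.
have e2 : (\int[mu]_x (S x * \1_`[0, +oo[ x)%:E =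
           \int[mu]_x (S x * \1_`[0, b] x)%:E)%E.
  apply: eq_integral => x _; congr EFin; rewrite !indicE !mem_setE /= !in_itv /= ?andbT.
  case: (leP 0 x) => h0 /=; last by rewrite !mulr0.
  case: (leP x b) => hb //.
  by rewrite hS0 ?mul0r //; lra.
have e3 : (\int[mu]_x (F x * \1_`]-oo, 0[ x)%:E =
           \int[mu]_x (F x * \1_`[a, 0[ x)%:E)%E.
  apply: eq_integral => x _; congr EFin; rewrite !indicE !mem_setE /= !in_itv /=.
  case: (ltP x 0) => h0 /=; last by rewrite andbF.
  case: (leP a x) => hb //.
  by rewrite hF0 ?mul0r //; lra.
have mS := @mS _ _ _ _ X; have mF := @mF _ _ _ _ X.
have S_ge0 := @S_ge0 _ _ _ _ X; have F_ge0 := @F_ge0 _ _ _ _ X.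
have FS := @FS _ _ _ _ X.
have e4 : (\int[mu]_x (F x * \1_`[a, 0[ x)%:E +
           \int[mu]_x (S x * \1_`[a, 0[ x)%:E = (0 - a)%:E)%E.
  rewrite -I_add //; rewrite -(@mu_co _ a 0 ha2) -I_one//.
  apply: eq_integral => x _; congr EFin; by rewrite -mulrDl FS.
have e5 : (\int[mu]_x (S x * \1_`[a, b] x)%:E =
           \int[mu]_x (S x * \1_`[a, 0[ x)%:E + \int[mu]_x (S x * \1_`[0, b] x)%:E)%E.
  rewrite -I_add //; apply: eq_integral => x _; congr EFin.
  rewrite !indicE !mem_setE /= !in_itv /= -mulrDr; congr (_ * _).
  case: (leP a x) => h1 /=; case: (ltP x 0) => h2 /=; case: (leP 0 x) => h3 /=;
    case: (leP x b) => h4 /=; rewrite ?addr0 ?add0r //; lra.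
have e6 : (\int[mu]_x (S x * \1_`[a, b] x)%:E =
           \int[mu]_x (1 * \1_`[a, l[ x)%:E + \int[mu]_x (S x * \1_`[l, r] x)%:E)%E.
  rewrite -I_add //; apply: eq_integral => x _; congr EFin.
  rewrite !indicE !mem_setE /= !in_itv /=.
  case: (leP a x) => h1 /=; case: (ltP x l) => h2 /=; case: (leP l x) => h3 /=;
    case: (leP x b) => h4 /=; case: (leP x r) => h5 /=;
    rewrite ?mulr0 ?mulr1 ?addr0 ?add0r //; try lra.
  - by move: (FS x); rewrite hF0 // add0r.
  - by rewrite hS0 //; lra.
rewrite I_one // mu_co // in e6.
have e7 : (\int[mu]_x (F x * \1_`[l, r] x)%:E +
           \int[mu]_x (S x * \1_`[l, r] x)%:E = (r - l)%:E)%E.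
  rewrite -I_add //; rewrite -(@mu_cc _ l r lr) -I_one//.
  apply: eq_integral => x _; congr EFin; by rewrite -mulrDl FS.
have ge0I (g : R -> R) (A : set R) : (forall x, 0 <= g x) ->
    (0 <= \int[mu]_x (g x * \1_A x)%:E)%E.
  by move=> g0; apply: integral_ge0 => x _; rewrite lee_fin mulr_ge0.
have [f2 [s2 [Hf2 Hs2]]] := fin2 (ge0I _ _ F_ge0) (ge0I _ _ S_ge0) e4.
have [fL [sL [HfL HsL]]] := fin2 (ge0I _ _ F_ge0) (ge0I _ _ S_ge0) e7.
rewrite HsL in e6; rewrite e6 Hs2 -EFinD in e5.
have [s1 Hs1] := fin1 (ge0I _ _ S_ge0) e5 (fin_numE _).
rewrite Hf2 Hs2 -EFinD in e4; rewrite HfL HsL -EFinD in e7.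
rewrite Hs1 -EFinD in e5.
case: e4 => e4; case: e5 => e5; case: e7 => e7.
exists sL, fL; split; first by rewrite int_indic.
split; first by rewrite int_indic.
split; last by lra.
rewrite E1 e2 e3 Hs1 Hf2 -EFinB; congr EFin; lra.
Qed.

End main.


Lemma Nf {R : realType} (D : set R) (h : R -> R) (t v : R) : measurable D -> 0 < t ->
  (forall x, 0 <= h x) ->
  (\int[lebesgue_measure]_(x in D) (h x)%:E = v%:E)%E ->
  Lnorm lebesgue_measure (t^-1)%:E (EFin \o (fun x => h x `^ t * \1_D x)) =
  (v `^ t)%:E.
Proof.
move=> mD t0 h0 hv; rewrite unlock /=.
rewrite (_ : (fun x => _) = (fun x => (h x * \1_D x)%:E)); last first.
  apply/funext => x; congr EFin; rewrite indicE.
  case: (x \in D) => /=; rewrite ?mulr1n ?mulr0n.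
    rewrite !mulr1 ger0_norm ?powR_ge0// -powRrM mulfV ?gt_eqF// powRr1//.
  by rewrite !mulr0 normr0 powR0// invr_neq0// gt_eqF.
by rewrite -(int_indic D h mD) hv poweR_EFin invrK.
Qed.

Theorem proposition7 (d : measure_display) (T : measurableType d) (R : realType)
  (P : probability T R) (X : {RV P >-> R}) :
  has_lbound [set x : R | (0 < cdfRV X x)%R] ->
  has_ubound [set x : R | (0 < survRV X x)%R] ->
  (forall theta : R, 0 < theta < 1 -> (CIGF X theta (1 - theta) < +oo)%E) ->
  forall theta : R, 0 < theta < 1 ->
    (CIGF X theta (1 - theta) <=
     ((rsupp X - fine 'E_P[X]) `^ theta *
      (fine 'E_P[X] - lsupp X) `^ (1 - theta))%:E)%E.
Proof.
move=> hl hr _ th /andP[th0 th1].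
have [sL [fL [HS [HF [HE Hsum]]]]] := @key _ _ _ _ X hl hr.
rewrite HE /=.
have -> : rsupp X - (lsupp X + sL) = fL by lra.
have -> : lsupp X + sL - lsupp X = sL by lra.
pose D := `[lsupp X, rsupp X]%classic : set R.
have mD : measurable D by exact: measurable_itv.
pose f x := cdfRV X x `^ th * \1_D x.
pose g x := survRV X x `^ (1 - th) * \1_D x.
have mf : measurable_fun setT f.
  apply: measurable_funM => //.
  apply: (@measurableT_comp _ _ _ _ _ _ (@powR R ^~ th)) => //; exact: mF.
have mg : measurable_fun setT g.
  apply: measurable_funM => //.
  apply: (@measurableT_comp _ _ _ _ _ _ (@powR R ^~ (1 - th))) => //; exact: mS.
have th0' : 0 < th^-1 by rewrite invr_gt0.
have th1' : 0 < (1 - th)^-1 by rewrite invr_gt0 subr_gt0.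
have pq : th^-1^-1 + (1 - th)^-1^-1 = 1 by rewrite !invrK addrC subrK.
have H := hoelder lebesgue_measure mf mg th0' th1' pq.
have th2 : 0 < 1 - th by rewrite subr_gt0.
move: H; rewrite /f /g (Nf D _ _ _ mD th0 (@F_ge0 _ _ _ _ X) HF).
rewrite (Nf D _ _ _ mD th2 (@S_ge0 _ _ _ _ X) HS) => H.
rewrite EFinM; apply: le_trans H.
rewrite Lnorm1 /CIGF (int_indic _ _ mD) le_eqVlt; apply/orP; left; apply/eqP.
apply: eq_integral => x _ /=; congr EFin.
rewrite indicE; case: (x \in D) => /=; rewrite ?mulr1n ?mulr0n.
  by rewrite !mulr1 ger0_norm // mulr_ge0 // powR_ge0.
by rewrite !mulr0 normr0.
Qed.
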